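(* For all $b,b'\in\mathbb F_{3^{2m}}$, the vector $(\mathrm{Tr}_{2m}(bt)\,\mathrm{Tr}_{2m}(b't))_{t\in\mathbb F_{3^{2m}}}$ belongs to $\mathcal C_3(\mathbb D_d)$.
   Context: Let $m\ge 2$ be an integer. For $s\in\{m,2m\}$ let $\mathrm{Tr}_s:\mathbb F_{3^s}\to\mathbb F_3$ denote the absolute trace. Vectors in $\mathbb F_3^{3^{2m}}$ are indexed by $\mathbb F_{3^{2m}}$, and a function $f:\mathbb F_{3^{2m}}\to\mathbb F_3$ is identified with $(f(t))_{t\in\mathbb F_{3^{2m}}}$. Let $\mathcal C(2m,3)=\{(\mathrm{Tr}_{2m}(at^{3^m+1}+bt)+h)_{t\in\mathbb F_{3^{2m}}}: a\in\mathbb F_{3^m}, b\in\mathbb F_{3^{2m}}, h\in\mathbb F_3\}$, let $d$ be its minimum nonzero Hamming weight, let $\mathbb D_d$ be the incidence structure on $\mathbb F_{3^{2m}}$ whose blocks are the supports of the weight-$d$ codewords, and let $\mathcal C_3(\mathbb D_d)$ be the $\mathbb F_3$-span of the incidence vectors of the blocks (entry $1$ on the block, $0$ elsewhere). *)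

(* Defs.v *)
From HB Require Import structures.
From mathcomp Require Import all_boot all_order all_algebra all_field.
Set Implicit Arguments. Unset Strict Implicit. Unset Printing Implicit Defensive.
Import GRing.Theory.
Local Open Scope ring_scope.

Section Defs.
Variables (F : finFieldType) (m : nat).

Definition Tr2m (x : F) : F := \sum_(i < (2 * m)%N) x ^+ (3 ^ i).

Definition trF3 (x : F) : 'F_3 :=
  odflt 0 [pick k : 'F_3 | ((k : nat)%:R : F) == Tr2m x].

Definition subF : {set F} := [set a : F | a ^+ (3 ^ m) == a].

Local Notation vec := {ffun F -> 'F_3}.

Definition codeC : {set vec} :=
  [set c : vec | [exists a : F, exists b : F, exists h : 'F_3,
     (a \in subF) &&
     (c == [ffun t => trF3 (a * t ^+ (3 ^ m + 1) + b * t) + h])]].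

Definition supp (c : vec) : {set F} := [set t | c t != 0].
Definition wt (c : vec) : nat := #|supp c|.

Definition min_wt_codeword (c : vec) : bool :=
  [&& c \in codeC, c != 0 &
      [forall c' in codeC, (c' != 0) ==> (wt c <= wt c')%N]].

Definition is_block (B : {set F}) : bool :=
  [exists c : vec, min_wt_codeword c && (supp c == B)].

Definition incvec (B : {set F}) : vec := [ffun t => if t \in B then 1 else 0].

Definition in_code_of_design (v : vec) : Prop :=
  exists lam : {ffun {set F} -> 'F_3},
    forall t : F, v t = \sum_(B : {set F} | is_block B) lam B * incvec B t.

End Defs.

(* Main.v *)
Require Import Defs.
From HB Require Import structures.
From mathcomp Require Import all_boot all_order all_algebra all_field.
From mathcomp Require Import ring zify.
Import GRing.Theory.
Local Open Scope ring_scope.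

Section Proof1.
Variables (F : finFieldType) (m : nat).
Hypotheses (hm : (2 <= m)%N) (hF : #|F| = (3 ^ (2 * m))%N).

Local Notation q := (3 ^ m)%N.
Local Notation Tr := (@Tr2m F m).
Local Notation tr := (@trF3 F m).

Lemma char3 : (3%N \in [pchar F])%R.
Proof. by apply: (card_finPcharP hF). Qed.

Lemma F3 : (3%:R : F) = 0.
Proof. exact: pcharf0 char3. Qed.

Lemma pnat3 k : [pchar F].-nat (3 ^ k)%N.
Proof. by rewrite pnatX pnatE // char3. Qed.

Lemma frobD k (x y : F) : (x + y) ^+ (3 ^ k) = x ^+ (3 ^ k) + y ^+ (3 ^ k).
Proof. exact: exprDn_pchar (pnat3 k). Qed.
Lemma frobN k (x : F) : (- x) ^+ (3 ^ k) = - x ^+ (3 ^ k).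
Proof. exact: exprNn_pchar (pnat3 k). Qed.
Lemma frobB k (x y : F) : (x - y) ^+ (3 ^ k) = x ^+ (3 ^ k) - y ^+ (3 ^ k).
Proof. by rewrite frobD frobN. Qed.

Lemma cardF_qq : #|F| = (q * q)%N.
Proof. by rewrite hF -expnD addnn -mul2n. Qed.

Lemma xqq (x : F) : (x ^+ q) ^+ q = x.
Proof. by rewrite -exprM -cardF_qq expf_card. Qed.

Lemma xF (x : F) : x ^+ (3 ^ (2 * m)) = x.
Proof. by rewrite -hF expf_card. Qed.

Lemma sum_frob k n (f : 'I_n -> F) :
  (\sum_(i < n) f i) ^+ (3 ^ k) = \sum_(i < n) (f i) ^+ (3 ^ k).
Proof.
elim: n f => [|n IH] f; first by rewrite !big_ord0 expr0n expn_eq0.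
by rewrite !big_ord_recr /= frobD IH.
Qed.

Lemma TrD x y : Tr (x + y) = Tr x + Tr y.
Proof. by rewrite /Tr2m -big_split; apply: eq_bigr => i _; rewrite frobD. Qed.
Lemma Tr0 : Tr 0 = 0.
Proof. by rewrite /Tr2m big1 // => i _; rewrite expr0n expn_eq0. Qed.
Lemma TrN x : Tr (- x) = - Tr x.
Proof. by rewrite /Tr2m -sumrN; apply: eq_bigr => i _; rewrite frobN. Qed.

Lemma shift_sum n (g : nat -> F) : g n = g 0%N ->
  \sum_(i < n) g i.+1 = \sum_(i < n) g i.
Proof.
case: n => [|n] e; first by rewrite !big_ord0.
by rewrite big_ord_recr big_ord_recl /= e addrC.
Qed.

Lemma Tr_frob x : Tr (x ^+ 3) = Tr x.
Proof.
rewrite /Tr2m.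
transitivity (\sum_(i < 2 * m) x ^+ (3 ^ i.+1)).
  by apply: eq_bigr => i _; rewrite -exprM expnS.
exact: (shift_sum (2 * m)%N (fun i => x ^+ (3 ^ i)) (etrans (xF x) (esym (expr1 x)))).
Qed.

Lemma TrX k x : Tr (x ^+ (3 ^ k)) = Tr x.
Proof.
elim: k => [|k IH]; first by rewrite expn0 expr1.
by rewrite expnSr exprM Tr_frob.
Qed.

Lemma Tr_cube x : Tr x ^+ 3 = Tr x.
Proof.
have := sum_frob 1 _ (fun i : 'I_(2 * m) => x ^+ (3 ^ i)).
rewrite expn1 => ->.
rewrite -[RHS](Tr_frob x) /Tr2m; apply: eq_bigr => i _.
by rewrite exprAC.
Qed.

Lemma cube_vals (y : F) : y ^+ 3 = y -> y = 0 \/ y = 1 \/ y = 2%:R.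
Proof.
move=> e.
have : y * (y - 1) * (y - 2%:R) = 0.
  have -> : y * (y - 1) * (y - 2%:R) = (y ^+ 3 - y) - 3%:R * (y ^+ 2 - y) by ring.
  by rewrite e F3 subrr mul0r subr0.
move/eqP; rewrite !mulf_eq0 !subr_eq0 => /orP[/orP[]|] /eqP; tauto.
Qed.

Definition emb (k : 'F_3) : F := ((k : nat)%:R).

Lemma embD k1 k2 : emb (k1 + k2) = emb k1 + emb k2.
Proof. by rewrite /emb -natrD -(GRing.natr_mod_pchar char3 (k1 + k2)%N). Qed.
Lemma embM k1 k2 : emb (k1 * k2) = emb k1 * emb k2.
Proof. by rewrite /emb -natrM -(GRing.natr_mod_pchar char3 (k1 * k2)%N). Qed.
Lemma emb0 : emb 0 = 0. Proof. by []. Qed.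
Lemma emb1 : emb 1 = 1. Proof. by rewrite /emb /=. Qed.

Lemma nat_eqF a b : (a < 3)%N -> (b < 3)%N -> (a%:R : F) = b%:R -> a = b.
Proof.
move=> ha hb e; wlog: a b ha hb e / (a <= b)%N.
  move=> H; case: (leqP a b) => [|/ltnW] h; first exact: H.
  by symmetry; apply: H.
move=> hab; have : (3 %| b - a)%N by rewrite (GRing.dvdn_pcharf char3) natrB // e subrr.
move=> /dvdnP [k hk]; lia.
Qed.

Lemma emb_inj : injective emb.
Proof.
move=> k1 k2 e; apply: val_inj; apply: nat_eqF e.
  by case: k1.
by case: k2.
Qed.

Lemma trF3E x : emb (tr x) = Tr x.
Proof.
rewrite /trF3; case: pickP => [k /eqP //|H].
exfalso; case: (cube_vals _ (Tr_cube x)) => [e|[e|e]].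
- by move: (H 0); rewrite e /= eqxx.
- by move: (H 1); rewrite e /= eqxx.
- pose two : 'F_3 := 1 + 1.
  by move: (H two); rewrite e (_ : (two : nat) = 2%N) // eqxx.
Qed.

Lemma trD x y : tr (x + y) = tr x + tr y.
Proof. by apply: emb_inj; rewrite embD !trF3E TrD. Qed.
Lemma tr0 : tr 0 = 0.
Proof. by apply: emb_inj; rewrite trF3E Tr0. Qed.
Lemma trN x : tr (- x) = - tr x.
Proof. by apply/eqP; rewrite -addr_eq0 -trD addNr tr0. Qed.
Lemma trB x y : tr (x - y) = tr x - tr y.
Proof. by rewrite trD trN. Qed.
Lemma trMn x n : tr (x *+ n) = tr x *+ n.
Proof. by elim: n => [|n IH]; rewrite ?mulr0n ?tr0 // !mulrS trD IH. Qed.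
Lemma tr_emb k x : tr (emb k * x) = k * tr x.
Proof.
by rewrite /emb mulr_natl trMn -mulr_natl natr_Zp.
Qed.
Lemma tr_frob x : tr (x ^+ q) = tr x.
Proof. by apply: emb_inj; rewrite !trF3E TrX. Qed.


Lemma NmD (x s : F) : (x + s) ^+ (q + 1) = x ^+ (q+1) + x ^+ q * s + s ^+ q * x + s ^+ (q+1).
Proof. rewrite !exprD !expr1 frobD; ring. Qed.

Lemma NmN (x : F) : (- x) ^+ (q+1) = x ^+ (q+1).
Proof. by rewrite !exprD !expr1 frobN mulrNN. Qed.

Lemma Nm_sub (x : F) : (x ^+ (q+1)) ^+ q = x ^+ (q+1).
Proof. by rewrite exprD expr1 exprMn xqq mulrC. Qed.

Lemma tr_expand (a b x s : F) : a ^+ q = a ->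
  tr (a * (x + s) ^+ (q+1) + b * (x + s)) =
  tr (a * x ^+ (q+1) + (b + (a * s ^+ q) *+ 2) * x) + tr (a * s ^+ (q+1) + b * s).
Proof.
move=> ha.
have eC : tr (a * x ^+ q * s) = tr (a * s ^+ q * x).
  rewrite -[LHS]tr_frob !exprMn ha xqq; congr (trF3 m _); ring.
have -> : a * (x + s) ^+ (q+1) + b * (x + s) =
   (a * x ^+ (q+1) + (b + (a * s ^+ q) *+ 2) * x) + (a * s ^+ (q+1) + b * s)
   + (a * x ^+ q * s - a * s ^+ q * x) by rewrite NmD; ring.
by rewrite !trD trN eC subrr addr0.
Qed.

Definition cw (a b : F) (h : 'F_3) : {ffun F -> 'F_3} :=
  [ffun t => tr (a * t ^+ (q + 1) + b * t) + h].

Lemma cw_in (a b : F) h : a ^+ q = a -> cw a b h \in codeC F m.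
Proof.
move=> ha; rewrite inE; apply/existsP; exists a; apply/existsP; exists b.
apply/existsP; exists h; by rewrite inE ha !eqxx.
Qed.

Lemma codeCP (c : {ffun F -> 'F_3}) : c \in codeC F m -> exists a b h, a ^+ q = a /\ c = cw a b h.
Proof.
rewrite inE => /existsP [a /existsP [b /existsP [h /andP [ha /eqP ->]]]].
by exists a, b, h; split => //; move: ha; rewrite inE => /eqP.
Qed.

Lemma cw_transform (a b : F) h (mu r x : F) : a ^+ q = a ->
  cw a b h (mu * x + r) = cw (a * mu ^+ (q + 1)) ((b + (a * r ^+ q) *+ 2) * mu)
     (tr (a * r ^+ (q+1) + b * r) + h) x.
Proof.
move=> ha; rewrite !ffunE tr_expand // (exprMn _ mu x) -addrA.
congr (_ + _); congr (trF3 m _); ring.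
Qed.

Lemma cw_shift (a b : F) h (x s : F) : a ^+ q = a -> tr (a * s ^+ (q+1)) = 0 ->
  cw a b h (x + s) = cw a b h x + (tr ((a * s ^+ q) *+ 2 * x) + tr (b * s)).
Proof.
move=> ha hs; rewrite !ffunE tr_expand // mulrDl !trD hs add0r; ring.
Qed.

Lemma cw_shiftN (a b : F) h (x s : F) : a ^+ q = a -> tr (a * s ^+ (q+1)) = 0 ->
  cw a b h (x - s) = cw a b h x - (tr ((a * s ^+ q) *+ 2 * x) + tr (b * s)).
Proof.
move=> ha hs; rewrite cw_shift //; last by rewrite NmN.
rewrite frobN mulrN mulNrn mulNr trN mulrN trN; ring.
Qed.

Definition zs (c : {ffun F -> 'F_3}) : nat := #|[set t | c t == 0]|.

Lemma wt_zs (c : {ffun F -> 'F_3}) : (wt c + zs c)%N = #|F|.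
Proof.
rewrite /wt /zs -(cardsC (supp c)); congr (_ + _)%N.
by apply: eq_card => t; rewrite !inE negbK.
Qed.

Lemma wt_comp (c : {ffun F -> 'F_3}) (mu r : F) : mu != 0 ->
  wt [ffun x => c (mu * x + r)] = wt c.
Proof.
move=> mu0; rewrite /wt -(@card_preimset _ (fun x => mu * x + r) (supp c)).
  by apply: eq_card => t; rewrite !inE ffunE.
by move=> x y /addIr /(mulfI mu0).
Qed.

Lemma wt0 (c : {ffun F -> 'F_3}) : wt c = 0%N -> c = 0.
Proof.
rewrite /wt => /eqP; rewrite cards_eq0 => /eqP H; apply/ffunP => t.
rewrite ffunE; apply/eqP; apply: contraT => nz.
have : t \in supp c by rewrite inE.
by rewrite H inE.
Qed.

Lemma wt_zero : wt (0 : {ffun F -> 'F_3}) = 0%N.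
Proof.
rewrite /wt; apply/eqP; rewrite cards_eq0; apply/eqP/setP => t.
by rewrite !inE ffunE eqxx.
Qed.

Lemma mw_comp {c : {ffun F -> 'F_3}} {a b : F} {h} {mu} (r : F) : min_wt_codeword m c -> c = cw a b h -> a ^+ q = a ->
  mu != 0 -> min_wt_codeword m [ffun x => c (mu * x + r)].
Proof.
move=> /and3P [cC cnz cmin] ec ha mu0.
have eq : [ffun x => c (mu * x + r)] = cw (a * mu ^+ (q + 1))
   ((b + (a * r ^+ q) *+ 2) * mu) (tr (a * r ^+ (q+1) + b * r) + h).
  by apply/ffunP => x; rewrite ffunE ec cw_transform.
apply/and3P; split.
- by rewrite eq; apply: cw_in; rewrite exprMn ha Nm_sub.
- apply/eqP => H; move/eqP: cnz; apply; apply: wt0.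
  by rewrite -(wt_comp c mu r mu0) H wt_zero.
- apply/forallP => c'; apply/implyP => hc'; apply/implyP => nz.
  rewrite wt_comp //; exact: (implyP (implyP (forallP cmin c') hc') nz).
Qed.

Definition InS (g : F -> 'F_3) := exists lam : {ffun {set F} -> 'F_3},
  forall t, g t = \sum_(B : {set F} | is_block m B) lam B * incvec B t.

Lemma InS_ext g1 g2 : InS g1 -> g1 =1 g2 -> InS g2.
Proof. by move=> [lam H] e; exists lam => t; rewrite -e. Qed.
Arguments InS_ext {g1 g2}.

Lemma InS_add {g1 g2} : InS g1 -> InS g2 -> InS (fun t => g1 t + g2 t).
Proof.
move=> [l1 H1] [l2 H2]; exists [ffun B => l1 B + l2 B] => t.
rewrite H1 H2 -big_split; apply: eq_bigr => B _; by rewrite !ffunE mulrDl.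
Qed.

Lemma InS_scale k {g} : InS g -> InS (fun t => k * g t).
Proof.
move=> [l H]; exists [ffun B => k * l B] => t.
rewrite H mulr_sumr; apply: eq_bigr => B _; by rewrite !ffunE mulrA.
Qed.

Lemma sqF3 (x : 'F_3) : x != 0 -> x ^+ 2 = 1.
Proof.
move=> nz; have := expf_card x; rewrite card_Fp // => e.
by apply: (mulIf nz); rewrite mul1r -exprSr.
Qed.

Lemma InS_sq {c : {ffun F -> 'F_3}} : min_wt_codeword m c -> InS (fun t => c t ^+ 2).
Proof.
move=> mc; exists [ffun B => if B == supp c then 1 else 0] => t.
rewrite (bigD1 (supp c)) /=; last by apply/existsP; exists c; rewrite mc eqxx.
rewrite ffunE eqxx mul1r big1 ?addr0.
  rewrite /incvec ffunE inE; case: eqP => [->|/eqP nz]; first by rewrite expr2 mul0r.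
  by rewrite sqF3.
by move=> B /andP [_ nB]; rewrite ffunE (negbTE nB) mul0r.
Qed.

Lemma id3 (x d : 'F_3) : x ^+ 2 + (x + d) ^+ 2 + (x - d) ^+ 2 = - d ^+ 2.
Proof.
apply/eqP; rewrite -subr_eq0 opprK.
have -> : x ^+ 2 + (x + d) ^+ 2 + (x - d) ^+ 2 + d ^+ 2 = 3%:R * (x ^+ 2 + d ^+ 2) by ring.
by rewrite (_ : 3%:R = 0 :> 'F_3) ?mul0r //; apply: val_inj.
Qed.

Lemma two_nz : (2%:R : F) != 0.
Proof. by rewrite -(GRing.dvdn_pcharf char3). Qed.

Lemma main_sq (c : {ffun F -> 'F_3}) (a b : F) h (s e : F) : min_wt_codeword m c -> c = cw a b h -> a ^+ q = a ->
  a != 0 -> s != 0 -> tr (a * s ^+ (q+1)) = 0 ->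
  (forall (u : F) v, u != 0 -> exists r, tr (u * r) = v) ->
  InS (fun t => tr (e * t) ^+ 2).
Proof.
move=> mc ec ha a0 s0 hs surj.
have [->|e0] := eqVneq e 0.
  apply: (InS_ext (InS_scale 0 (InS_sq mc))) => t.
  by rewrite mul0r mul0r tr0 expr2 mul0r.
set u2 := (a * s ^+ q) *+ 2.
have u20 : u2 != 0.
  by rewrite /u2 -mulr_natl mulf_neq0 ?two_nz // mulf_neq0 // expf_neq0.
set mu := e / u2.
have mu0 : mu != 0 by rewrite /mu mulf_neq0 // invr_eq0.
have [r hr] := surj u2 (- tr (b * s)) u20.
have G r' : InS (fun t => c (mu * t + r') ^+ 2).
  apply: (InS_ext (InS_sq (mw_comp r' mc ec ha mu0))) => t.
  by rewrite ffunE.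
have key t : tr (e * t) ^+ 2 = - (c (mu * t + r) ^+ 2 + c (mu * t + (r + s)) ^+ 2
      + c (mu * t + (r - s)) ^+ 2).
  rewrite !addrA ec; set x := mu * t + r.
  rewrite (cw_shift a b h x s ha hs) (cw_shiftN a b h x s ha hs) id3 opprK.
  congr (_ ^+ 2); rewrite /x mulrDr !trD hr mulrA (_ : u2 * mu = e).
    by rewrite addrNK.
  by rewrite /mu mulrC divfK.
apply: (InS_ext (InS_scale (-1) (InS_add (InS_add (G r) (G (r + s))) (G (r - s))))).
by move=> t; rewrite key mulN1r.
Qed.


Lemma q_ge9 : (9 <= q)%N.
Proof. by rewrite (_ : 9%N = 3 ^ 2)%N // leq_exp2l. Qed.

Lemma Tr_nz : exists t, Tr t != 0.
Proof.
have [n hn] : exists n, (2 * m)%N = n.+1 by exists (2 * m).-1; lia.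
pose P : {poly F} := \sum_(i < n.+1) 'X^(3 ^ i).
have PE t : P.[t] = Tr t.
  rewrite /Tr2m hn /P horner_sum; apply: eq_bigr => i _; by rewrite hornerXn.
have P1 : P`_1 = 1.
  rewrite /P coef_sum (bigD1 ord0) //= coefXn expn0 eqxx big1 ?addr0 // => i ni0.
  rewrite coefXn; case: eqP => // e1; exfalso.
  have : (3 ^ 1 <= 3 ^ i)%N by rewrite leq_exp2l // lt0n.
  by rewrite -e1.
have Pnz : P != 0.
  by apply/eqP => P0; move: P1; rewrite P0 coef0 => /eqP; rewrite eq_sym oner_eq0.
have Psz : (size P <= (3 ^ n).+1)%N.
  apply: leq_trans (size_sum _ _ _) _; apply/bigmax_leqP => i _.
  by rewrite size_polyXn ltnS leq_exp2l // -ltnS.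
case: (boolP [exists t, Tr t != 0]) => [/existsP [t ht]|/existsPn H]; first by exists t.
exfalso.
have hall : all (root P) (enum F).
  by apply/allP => t _; rewrite /root PE; exact: negbNE (H t).
have := @max_poly_roots F P (enum F) Pnz hall (enum_uniq F).
rewrite -cardE hF hn expnS => h.
have : (0 < 3 ^ n)%N by rewrite expn_gt0.
have := leq_trans h Psz; generalize (3 ^ n)%N => x2; lia.
Qed.

Lemma tr_nz : exists t, tr t != 0.
Proof.
have [t ht] := Tr_nz; exists t; apply: contra ht => /eqP e.
by rewrite -trF3E e.
Qed.

Lemma tr_surj (u : F) v : u != 0 -> exists r, tr (u * r) = v.
Proof.
move=> u0; have [t1 w0] := tr_nz.
exists (emb (v / tr t1) * t1 / u).
have -> : u * (emb (v / tr t1) * t1 / u) = emb (v / tr t1) * t1 by field.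
by rewrite tr_emb divfK.
Qed.

Lemma roots_le n (y : F) : (0 < n)%N -> (#|[set x : F | x ^+ n == y]| <= n)%N.
Proof.
move=> n0.
have := @max_poly_roots F ('X^n - y%:P) (enum [set x : F | x ^+ n == y]).
rewrite size_XnsubC // ltnS -cardE; apply.
- by rewrite -size_poly_eq0 size_XnsubC.
- apply/allP => x; rewrite mem_enum inE => /eqP hx.
  by rewrite /root !hornerE hx subrr.
- exact: enum_uniq.
Qed.

Lemma iso_exists (a : F) : a ^+ q = a -> a != 0 ->
  exists s, s != 0 /\ tr (a * s ^+ (q+1)) = 0.
Proof.
move=> ha a0.
set S0 := subF F m :\ 0.
set I := [set x ^+ (q + 1) | x in [set~ (0 : F)]].
have q9 := q_ge9.
have IS : I \subset S0.
  apply/subsetP => y /imsetP [x]; rewrite in_setC1 => x0 ->.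
  by rewrite !inE expf_neq0 // Nm_sub eqxx.
have S0le : (#|S0| <= q.-1)%N.
  apply: leq_trans (roots_le q.-1 1 _); last lia.
  apply: subset_leq_card; apply/subsetP => y; rewrite !inE => /andP [y0 yq].
  apply/eqP; apply: (mulIf y0); rewrite mul1r -exprSr prednK; last lia.
  exact/eqP.
have Ige : (q.-1 <= #|I|)%N.
  have cardA : #|[set~ (0:F)]| = (q * q).-1 by rewrite cardsC1 cardF_qq.
  have : ((q * q).-1 <= #|I| * (q + 1))%N.
    rewrite -cardA -sum1_card (partition_big (fun x => x ^+ (q+1)) (mem I)); last first.
      by move=> x xA; apply: imset_f.
    rewrite -sum_nat_const; apply: leq_sum => y _.
    rewrite sum1dep_card.
    apply: leq_trans (roots_le (q + 1) y _); last lia.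
    apply: subset_leq_card; apply/subsetP => x; rewrite !inE => /andP [_ ->] //.
  have -> : ((q * q).-1 = q.-1 * (q + 1))%N by nia.
  by rewrite leq_pmul2r ?addn1.
have IS0 : I = S0 by apply/eqP; rewrite eqEcard IS /= (leq_trans S0le Ige).
have : ~~ [forall y1, forall y2,
   [&& y1 \in S0, y2 \in S0 & tr (a * y1) == tr (a * y2)] ==> (y1 == y2)].
  apply/negP => /forallP H.
  have inj : {in S0 &, injective (fun y => tr (a * y))}.
    move=> y1 y2 h1 h2 e; apply/eqP; apply: (implyP (forallP (H y1) y2)).
    by rewrite h1 h2 e eqxx.
  have := card_in_imset inj.
  have := max_card ((fun y => tr (a * y)) @: S0).
  rewrite card_Fp // => h1 h2.
  have : (q.-1 <= #|S0|)%N by rewrite -IS0.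
  have := leq_trans (eq_leq (esym h2)) h1; lia.
move/forallPn => [y1 /forallPn [y2]]; rewrite negb_imply => /andP [/and3P [h1 h2 /eqP e] ne].
have yS0 : y1 - y2 \in S0.
  move: h1 h2; rewrite !inE subr_eq0 ne /= => /andP [_ /eqP h1] /andP [_ /eqP h2].
  by rewrite frobB h1 h2.
rewrite -IS0 in yS0; case/imsetP: yS0 => s; rewrite in_setC1 => s0 ys.
by exists s; split => //; rewrite -ys mulrBr trB e subrr.
Qed.


Lemma fiber_sum (g : F -> 'F_3) : (\sum_(v : 'F_3) #|[set t | g t == v]|)%N = #|F|.
Proof.
rewrite -sum1_card (partition_big g predT) //=; apply: eq_bigr => v _.
by rewrite sum1dep_card; apply: eq_card => t; rewrite !inE.
Qed.

Lemma sum_constF3 (n : nat) : (\sum_(v : 'F_3) n)%N = (3 * n)%N.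
Proof. by rewrite sum_nat_const card_Fp. Qed.

Lemma three_eq (f : 'F_3 -> nat) K : (\sum_v f v)%N = K ->
  (forall v, 3 * f v <= K)%N -> forall v, (3 * f v = K)%N.
Proof.
move=> hs hle v; apply/eqP; rewrite eqn_leq hle /=.
have e1 : (3 * K = 3 * f v + \sum_(w | w != v) 3 * f w)%N.
  by rewrite -hs big_distrr /= (bigD1 v).
have e2 : (\sum_(w | w != v) 3 * f w <= \sum_(w | w != v) K)%N by apply: leq_sum.
have e3 : (\sum_(w | w != v) K = 2 * K)%N.
  rewrite -(mul1n K) -big_distrl /= sum1dep_card.
  congr (_ * _)%N.
  have -> : #|[set w | w != v]| = #|predC1 v| by apply: eq_card => w; rewrite !inE.
  by rewrite cardC1 card_ord.
all: lia.
Qed.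

Lemma even_sym (A : {set F}) : 0 \notin A -> (forall t, t \in A -> - t \in A) ->
  ~~ odd #|A|.
Proof.
move=> h0 hA; move: {2}#|A| (leqnn #|A|) => n hle.
elim: n A hle h0 hA => [|n IH] A hle h0 hA.
  by move: hle; rewrite leqn0 => /eqP ->.
case: (set_0Vmem A) => [->|[t tA]]; first by rewrite cards0.
have t0 : t != 0 by apply: contraNneq h0 => <-.
have tnt : t != - t.
  apply: contra t0 => /eqP e.
  have : (2%:R : F) * t == 0 by rewrite mulr_natl mulr2n {2}e addrN.
  by rewrite mulf_eq0 (negbTE two_nz).
have sub : [set t; - t] \subset A.
  by apply/subsetP => x; rewrite !inE => /orP [] /eqP ->; [ | apply: hA].
set B := A :\: [set t; - t].
have cB : #|A| = (#|B| + 2)%N.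
  have := subset_leq_card sub; rewrite cards2 tnt => h2.
  by rewrite cardsD (setIidPr sub) cards2 tnt subnK.
have : ~~ odd #|B|.
  apply: IH.
  - lia.
  - by apply: contra h0; rewrite inE => /andP [].
  - move=> x; rewrite !inE => /andP [hx xA]; rewrite hA // andbT.
    apply: contra hx => /orP [] /eqP e; apply/orP.
      by right; rewrite -e opprK.
    by left; rewrite (oppr_inj e).
by rewrite cB addn2 /= negbK.
Qed.

Lemma mw_exists : exists c : {ffun F -> 'F_3}, min_wt_codeword m c.
Proof.
pose c0 := cw 0 0 1.
have c0C : c0 \in codeC F m by apply: cw_in; rewrite expr0n; have := q_ge9; case: q.
have c0nz : c0 != 0.
  apply/eqP => /ffunP /(_ 0); rewrite !ffunE !mul0r addr0 tr0 add0r.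
  by move/eqP; rewrite oner_eq0.
pose P := fun c : {ffun F -> 'F_3} => (c \in codeC F m) && (c != 0).
have P0 : P c0 by rewrite /P c0C c0nz.
case: (@arg_minnP _ c0 P (@wt F) P0) => c /andP [cC cnz] Hmin.
exists c; rewrite /min_wt_codeword cC cnz /=; apply/forallP => c'.
apply/implyP => hc'; apply/implyP => nz; apply: Hmin; by rewrite /P hc' nz.
Qed.

Lemma mw_quad {c : {ffun F -> 'F_3}} {a b : F} {h} : min_wt_codeword m c -> c = cw a b h -> a != 0.
Proof.
move=> mc ec; apply/eqP => a0; subst a.
case/and3P: mc => cC cnz cmin.
have E t : c t = tr (b * t) + h by rewrite ec ffunE mul0r add0r.
have zc : (3 * zs c <= #|F|)%N.
  case: (eqVneq b 0) => [b0|b0].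
    have h0 : h != 0.
      apply: contraNneq cnz => h0; apply/eqP/ffunP => t.
      by rewrite E b0 mul0r tr0 h0 add0r ffunE.
    have -> : zs c = 0%N.
      apply/eqP; rewrite cards_eq0; apply/eqP/setP => t.
      by rewrite !inE E b0 mul0r tr0 add0r (negbTE h0).
    by [].
  pose n0 := #|[set t | tr (b * t) == 0]|.
  have fib v : #|[set t | tr (b * t) == v]| = n0.
    have [r hr] := tr_surj b v b0.
    rewrite -(@card_preimset _ (fun t => t + r) [set t | tr (b * t) == v] (addIr r)).
    apply: eq_card => t; rewrite !inE mulrDr trD hr.
    by rewrite -subr_eq0 addrK.
  have : (3 * n0 = #|F|)%N.
    by rewrite -(fiber_sum (fun t => tr (b * t))) -sum_constF3; apply: eq_bigr => v _; rewrite fib.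
  have -> : zs c = n0.
    rewrite /zs -(fib (- h)); apply: eq_card => t; by rewrite !inE E addr_eq0.
  by move=> ->.
pose nv v := #|[set t | tr (t ^+ (q + 1)) == v]|.
have Q0 : tr ((0 : F) ^+ (q + 1)) = 0 by rewrite expr0n addn1 tr0.
have nv0 : odd (nv 0).
  rewrite /nv (cardsD1 0) inE Q0 eqxx /=.
  rewrite add0n; apply: even_sym; first by rewrite !inE eqxx.
  by move=> t; rewrite !inE NmN oppr_eq0.
have nv1 : ~~ odd (nv 1).
  apply: even_sym; first by rewrite inE Q0 eq_sym oner_eq0.
  by move=> t; rewrite !inE NmN.
have [v hv] : exists v, (#|F| < 3 * nv v)%N.
  case: (boolP [forall v, 3 * nv v <= #|F|]%N) => [/forallP H|/forallPn [v hv]].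
    have H3 := three_eq nv #|F| (fiber_sum (fun t => tr (t ^+ (q + 1)))) H.
    have e01 : nv 0 = nv 1.
      by have := H3 0; have := H3 1; rewrite /nv; lia.
    by move: nv1; rewrite -e01 nv0.
  by exists v; rewrite ltnNge.
have hvF : (nv v < #|F|)%N.
  rewrite ltn_neqAle max_card andbT; apply/negP => /eqP hfull.
  have hall t : tr (t ^+ (q + 1)) = v.
    have : [set t | tr (t ^+ (q + 1)) == v] = setT.
      by apply/eqP; rewrite eqEcard subsetT cardsT -hfull leqnn.
    by move/setP/(_ t); rewrite !inE => /eqP.
  have v0 : v = 0 by rewrite -(hall 0) Q0.
  subst v.
  have h2 t : tr (1 *+ 2 * t) = 0.
    have := tr_expand 1 0 t 1 (expr1n _ _).
    rewrite !mul1r !mul0r !addr0 !add0r !expr1n !hall => /esym.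
    have t1 : tr 1 = 0 by rewrite -(hall 1) expr1n.
    by move=> H; rewrite trD hall t1 add0r addr0 in H.
  have [t0 ht0] := tr_nz.
  move: ht0; rewrite (_ : t0 = 1 *+ 2 * (1 *+ 2 * t0)) ?h2 ?eqxx //.
  rewrite mulrA -natrM (_ : (2 * 2)%N = 3 + 1)%N // natrD F3 add0r mul1r.
  by [].
pose c' := cw 1 0 (- v).
have c'C : c' \in codeC F m by apply: cw_in; rewrite expr1n.
have zc' : zs c' = nv v.
  rewrite /zs /nv; apply: eq_card => t; rewrite !inE ffunE mul1r mul0r addr0.
  by rewrite subr_eq0.
have wc := wt_zs c; have wc' := wt_zs c'.
have c'nz : c' != 0.
  apply/eqP => e0; move: wc'; rewrite zc' e0 wt_zero => e1.
  by move: hvF; rewrite -e1 ltnn.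
have := implyP (implyP (forallP cmin c') c'C) c'nz.
lia.
Qed.

End Proof1.

Lemma sq_identity (x y : 'F_3) : (x + y) ^+ 2 + (-1) * (x - y) ^+ 2 = x * y.
Proof.
have -> : (x + y) ^+ 2 + (-1) * (x - y) ^+ 2 = 3%:R * (x * y) + x * y by ring.
by rewrite (_ : 3%:R = 0 :> 'F_3) ?mul0r ?add0r //; apply: val_inj.
Qed.

Theorem lemma3p7 (F : finFieldType) (m : nat) (hm : (2 <= m)%N)
  (hF : #|F| = (3 ^ (2 * m))%N) (b b' : F) :
  in_code_of_design m [ffun t : F => trF3 m (b * t) * trF3 m (b' * t)].
Proof.
have [c mc] := mw_exists F m hm hF.
have cC : c \in codeC F m by case/and3P: mc.
have [a [b0 [h [ha ec]]]] := codeCP F m c cC.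
have a0 := mw_quad F m hm hF mc ec.
have [s [s0 hs]] := iso_exists F m hm hF a ha a0.
have sq e := main_sq F m hm hF c a b0 h s e mc ec ha a0 s0 hs (tr_surj F m hm hF).
have H := InS_add F m (sq (b + b')) (InS_scale F m (-1) (sq (b - b'))).
have H2 : InS F m (fun t => [ffun t : F => trF3 m (b * t) * trF3 m (b' * t)] t).
  apply: (InS_ext F m _ _ H) => t.
  by rewrite ffunE mulrDl mulrBl (trD F m hm hF) (trB F m hm hF) sq_identity.
exact: H2.
Qed.
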